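(* For every $n\ge0$, the localization $(\underline n\downarrow\Delta)[\mathcal I^{-1}]$, obtained from the coslice category $(\underline n\downarrow\Delta)$ by formally inverting all morphisms whose underlying map is injective, is a thin category.
   Context: $\Delta$ denotes the category whose objects are the finite totally ordered sets $\underline k=\{1,\dots,k\}$ for $k\ge 0$ (including the empty set $\underline 0$) and whose morphisms are order-preserving maps. $\mathcal I\subseteq\Delta$ is the subcategory of injective order-preserving maps. Objects of $(\underline n\downarrow\Delta)$ are order-preserving maps $\underline n\to\underline k$ and morphisms are order-preserving maps $\underline k\to\underline k'$ making the triangle commute. A category is thin if any two parallel morphisms are equal. *)

(* Defs.v *)
From mathcomp Require Import all_boot.
Set Implicit Arguments. Unset Strict Implicit. Unset Printing Implicit Defensive.

(* The finite ordinal {1,...,k} is modelled by 'I_k = {0,...,k-1}. *)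

Definition monob (k l : nat) (g : {ffun 'I_k -> 'I_l}) : bool :=
  [forall i : 'I_k, forall j : 'I_k, (i <= j) ==> (g i <= g j)].

(* Objects of the coslice category (n ↓ Δ): order-preserving maps n -> k. *)
Record cobj (n : nat) := CObj {
  cdim : nat;
  cmap : {ffun 'I_n -> 'I_cdim};
  cmap_mono : monob cmap }.

Definition chom (n : nat) (a b : cobj n) :=
  { g : {ffun 'I_(cdim a) -> 'I_(cdim b)} |
      monob g && [forall i : 'I_n, g (cmap a i) == cmap b i] }.

Definition cinj (n : nat) (a b : cobj n) (w : chom a b) : bool :=
  injectiveb (fun x => sval w x).

Section Zigzag.
Variable n : nat.

(* Zigzags: paths in the free category on the morphisms of (n ↓ Δ)
   together with formal reverses of the morphisms in I. *)
Inductive zz : cobj n -> cobj n -> Type :=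
| znil (a : cobj n) : zz a a
| zfwd (a b c : cobj n) (g : chom a b) : zz b c -> zz a c
| zbwd (a b c : cobj n) (w : chom b a) : cinj w -> zz b c -> zz a c.

Fixpoint zcat (a b c : cobj n) (p : zz a b) : zz b c -> zz a c :=
  match p in zz a b return zz b c -> zz a c with
  | znil _ => fun q => q
  | zfwd _ _ _ g p' => fun q => zfwd g (zcat p' q)
  | zbwd _ _ _ w hw p' => fun q => zbwd hw (zcat p' q)
  end.

Inductive zbasic : forall a b : cobj n, zz a b -> zz a b -> Prop :=
| zb_comp (a b c : cobj n) (g : chom a b) (h : chom b c) (k : chom a c) :
    (forall x, sval k x = sval h (sval g x)) ->
    zbasic (zfwd g (zfwd h (znil c))) (zfwd k (znil c))
| zb_id (a : cobj n) (k : chom a a) :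
    (forall x, sval k x = x) ->
    zbasic (zfwd k (znil a)) (znil a)
| zb_inv_l (a b : cobj n) (w : chom a b) (hw : cinj w) :
    zbasic (zfwd w (zbwd hw (znil a))) (znil a)
| zb_inv_r (a b : cobj n) (w : chom a b) (hw : cinj w) :
    zbasic (zbwd hw (zfwd w (znil b))) (znil b).

(* Morphism equality in the localization (n ↓ Δ)[I^{-1}]: the smallest
   equivalence relation on zigzags a -> b that is a congruence for
   concatenation and contains the generating relations. *)
Inductive loc_eq : forall a b : cobj n, zz a b -> zz a b -> Prop :=
| le_refl a b (p : zz a b) : loc_eq p p
| le_sym a b (p q : zz a b) : loc_eq p q -> loc_eq q p
| le_trans a b (p q r : zz a b) : loc_eq p q -> loc_eq q r -> loc_eq p r
| le_step a x y b (p : zz a x) (l r : zz x y) (q : zz y b) :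
    zbasic l r -> loc_eq (zcat p (zcat l q)) (zcat p (zcat r q)).

End Zigzag.

Definition loc_thin (n : nat) : Prop :=
  forall (a b : cobj n) (p q : zz a b), loc_eq p q.

(* Main.v *)
Require Import Defs.
From mathcomp Require Import all_boot.

Section S.
Variable n : nat.
Implicit Types a b c : cobj n.

Lemma enum_sorted k (A : {pred 'I_k}) :
  sorted (relpre val ltn) (enum A).
Proof.
rewrite /enum_mem -enumT; apply: sorted_filter.
  by move=> x y z /= ; apply: ltn_trans.
by rewrite -sorted_map val_enum_ord iota_ltn_sorted.
Qed.

Lemma enum_val_lt k (A : {pred 'I_k}) (r s : 'I_#|A|) :
  r < s -> enum_val r < enum_val s.
Proof.
move=> rs.
rewrite (enum_val_nth (enum_val r) r) (enum_val_nth (enum_val r) s).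
apply: (sorted_ltn_nth (leT := relpre val ltn)) => //.
- by move=> x y z /=; apply: ltn_trans.
- exact: enum_sorted.
- by rewrite inE -cardE ltn_ord.
- by rewrite inE -cardE ltn_ord.
Qed.

Definition imA a : {set 'I_(cdim a)} := [set x | x \in codom (cmap a)].
Definition sdim a := #|imA a|.
Lemma mem_imA a i : cmap a i \in imA a.
Proof. by rewrite inE codom_f. Qed.
Definition srank a i : 'I_(sdim a) := enum_rank_in (mem_imA a i) (cmap a i).
Definition iota_f a (r : 'I_(sdim a)) : 'I_(cdim a) := enum_val r.
Lemma iotaK a i : iota_f a (srank a i) = cmap a i.
Proof. by rewrite /iota_f /srank enum_rankK_in // mem_imA. Qed.
Lemma iota_codom a r : iota_f a r \in codom (cmap a).
Proof. by have := enum_valP r; rewrite inE. Qed.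
Lemma iota_le a r s : (iota_f a r <= iota_f a s) = (r <= s).
Proof.
case: (ltngtP r s) => [h|h|h].
- by rewrite ltnW // enum_val_lt.
- by apply/negbTE; rewrite -ltnNge enum_val_lt.
- by rewrite (val_inj h) leqnn.
Qed.
Lemma srank_le a i j : (srank a i <= srank a j) = (cmap a i <= cmap a j).
Proof. by rewrite -iota_le !iotaK. Qed.
Lemma srank_surj a r : exists i, srank a i = r.
Proof.
exists (iinv (iota_codom a r)); apply: (@enum_val_inj _ (mem (imA a))).
by have := iotaK a (iinv (iota_codom a r)); rewrite f_iinv /iota_f.
Qed.

Lemma monobP k l (f : {ffun 'I_k -> 'I_l}) :
  (forall i j : 'I_k, i <= j -> f i <= f j) -> monob f.
Proof. by move=> H; apply/forallP => i; apply/forallP => j; apply/implyP/H. Qed.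

Lemma chomP a b (g : chom a b) :
  (forall x y : 'I_(cdim a), x <= y -> sval g x <= sval g y) /\
  (forall i, sval g (cmap a i) = cmap b i).
Proof.
case: g => g /= /andP [/forallP H1 /forallP H2]; split.
  by move=> x y; move: (H1 x) => /forallP /(_ y) /implyP.
by move=> i; apply/eqP.
Qed.

Arguments chomP {a b} g.
Lemma chom_eq a b (g h : chom a b) : (forall x, sval g x = sval h x) -> g = h.
Proof. by move=> H; apply/val_inj/ffunP. Qed.

Lemma monobE k l (f : {ffun 'I_k -> 'I_l}) :
  monob f -> forall i j : 'I_k, i <= j -> f i <= f j.
Proof. by move=> /forallP H i j; move: (H i) => /forallP /(_ j) /implyP. Qed.

Lemma sobj_proof a : monob [ffun i => srank a i].
Proof. by apply: monobP => i j ij; rewrite !ffunE srank_le; apply: monobE (cmap_mono a) _ _ ij. Qed.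


Definition sobj a : cobj n := @CObj n (sdim a) [ffun i => srank a i] (sobj_proof a).

Lemma siota_proof a :
  monob ([ffun r => iota_f a r] : {ffun 'I_(cdim (sobj a)) -> 'I_(cdim a)}) &&
  [forall i : 'I_n, ([ffun r => iota_f a r] : {ffun 'I_(cdim (sobj a)) -> 'I_(cdim a)}) (cmap (sobj a) i) == cmap a i].
Proof.
apply/andP; split.
  by apply: monobP => i j ij; rewrite !ffunE iota_le.
by apply/forallP => i; rewrite /= !ffunE iotaK.
Qed.

Definition siota a : chom (sobj a) a := exist _ [ffun r => iota_f a r] (siota_proof a).

Lemma siota_inj a : cinj (siota a).
Proof.
apply/injectiveP => x y /=; rewrite !ffunE => H.
by apply: (@enum_val_inj _ (mem (imA a))).
Qed.

Lemma ccomp_proof a b c (g : chom a b) (h : chom b c) :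
  monob [ffun x => sval h (sval g x)] && [forall i : 'I_n, [ffun x => sval h (sval g x)] (cmap a i) == cmap c i].
Proof.
have [g1 g2] := chomP g; have [h1 h2] := chomP h.
apply/andP; split.
  by apply: monobP => i j ij; rewrite !ffunE h1 // g1.
by apply/forallP => i; rewrite /= !ffunE g2 h2.
Qed.

Arguments ccomp_proof {a b c} g h.
Definition ccomp a b c (g : chom a b) (h : chom b c) : chom a c :=
  exist _ [ffun x => sval h (sval g x)] (ccomp_proof g h).

Arguments ccomp {a b c} g h.
Lemma ccompE a b c (g : chom a b) (h : chom b c) x :
  sval (ccomp g h) x = sval h (sval g x).
Proof. by rewrite /= ffunE. Qed.

Arguments chom_eq {a b} g h.
Lemma sobj_uniq a x (g h : chom (sobj a) x) : g = h.
Proof.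
apply: chom_eq => r; have [i <-] := srank_surj a r.
have [_ g2] := chomP g; have [_ h2] := chomP h.
by move: (g2 i) (h2 i); rewrite /= ffunE => -> ->.
Qed.

Arguments sobj_uniq {a x} g h.
Definition Q a b := forall i j : 'I_n, cmap a i <= cmap a j -> cmap b i <= cmap b j.

Lemma Q_trans a b c : Q a b -> Q b c -> Q a c.
Proof. by move=> H1 H2 i j /H1 /H2. Qed.

Lemma Q_chom a b (g : chom a b) : Q a b.
Proof. by have [g1 g2] := chomP g; move=> i j /g1; rewrite !g2. Qed.

Arguments Q_chom {a b} g.
Lemma Q_refl a : Q a a. Proof. by []. Qed.

Lemma build a c : Q a c -> exists m : chom (sobj a) (sobj c), True.
Proof.
move=> HQ.
pose f := [ffun r => srank c (iinv (iota_codom a r))] :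
  {ffun 'I_(cdim (sobj a)) -> 'I_(cdim (sobj c))}.
have P : monob f && [forall i : 'I_n, f (cmap (sobj a) i) == cmap (sobj c) i].
  apply/andP; split.
    apply: monobP => r s rs; rewrite !ffunE srank_le; apply: HQ.
    by rewrite !f_iinv iota_le.
  apply/forallP => i; rewrite /= !ffunE; apply/eqP.
  set j := iinv _.
  have Ej : cmap a j = cmap a i by rewrite f_iinv iotaK.
  apply: val_inj; apply/eqP; rewrite eqn_leq !srank_le.
  by rewrite !HQ // Ej.
by exists (exist _ f P).
Qed.

Lemma Q_inj a b (w : chom b a) : cinj w -> Q a b.
Proof.
move=> /injectiveP hw i j; have [w1 w2] := chomP w.
rewrite -!w2 => H; rewrite leqNgt; apply/negP => lt.
have := w1 _ _ (ltnW lt) => H2.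
have E : sval w (cmap b j) = sval w (cmap b i) by apply: val_inj; apply/eqP; rewrite eqn_leq H H2.
by move: lt; rewrite (hw _ _ E) ltnn.
Qed.


Arguments Q_inj {a b w}.

Lemma zcatA a b c d (p : zz a b) (q : zz b c) (r : zz c d) :
  zcat (zcat p q) r = zcat p (zcat q r).
Proof. by elim: p q r => //= [x y z g p IH|x y z w hw p IH] q r; rewrite IH. Qed.

Lemma zcatp0 a b (p : zz a b) : zcat p (znil b) = p.
Proof. by elim: p => //= [x y z g p IH|x y z w hw p IH]; rewrite IH. Qed.

Lemma cong a b (p q : zz a b) : loc_eq p q ->
  forall c d (x : zz c a) (y : zz b d), loc_eq (zcat x (zcat p y)) (zcat x (zcat q y)).
Proof.
elim=> {a b p q}.
- by move=> *; apply: le_refl.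
- by move=> a b p q _ IH c d x y; apply: le_sym.
- by move=> a b p q r _ IH1 _ IH2 c d x y; apply: le_trans (IH1 _ _ _ _) (IH2 _ _ _ _).
- move=> a x0 y0 b p l r q Hb c d x y.
  have H := le_step (zcat x p) (zcat q y) Hb.
  by rewrite !zcatA in H *.
Qed.

Lemma L_fwd a b c (g : chom a b) (p q : zz b c) : loc_eq p q -> loc_eq (zfwd g p) (zfwd g q).
Proof.
move=> /cong /(_ _ _ (zfwd g (znil b)) (znil c)); by rewrite /= !zcatp0.
Qed.

Lemma L_bwd a b c (w : chom b a) (hw : cinj w) (p q : zz b c) :
  loc_eq p q -> loc_eq (zbwd hw p) (zbwd hw q).
Proof.
move=> /cong /(_ _ _ (zbwd hw (znil b)) (znil c)); by rewrite /= !zcatp0.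
Qed.

Lemma L_comp a b c d (g : chom a b) (h : chom b c) (k : chom a c) (q : zz c d) :
  (forall x, sval k x = sval h (sval g x)) ->
  loc_eq (zfwd g (zfwd h q)) (zfwd k q).
Proof. by move=> H; apply: (le_step (znil a) q (zb_comp H)). Qed.

Lemma L_invl a b d (w : chom a b) (hw : cinj w) (q : zz a d) :
  loc_eq (zfwd w (zbwd hw q)) q.
Proof. exact: (le_step (znil a) q (zb_inv_l hw)). Qed.

Lemma L_invr a b d (w : chom a b) (hw : cinj w) (q : zz b d) :
  loc_eq (zbwd hw (zfwd w q)) q.
Proof. exact: (le_step (znil b) q (zb_inv_r hw)). Qed.

Definition N a b (m : chom (sobj a) (sobj b)) : zz a b :=
  zbwd (siota_inj a) (zfwd m (zfwd (siota b) (znil b))).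

Arguments N {a b} m.
Arguments Q_trans {a b c}.
Arguments build {a c}.
Arguments L_fwd {a b c} g {p q}.
Arguments L_bwd {a b c w} hw {p q}.
Arguments L_invl {a b d w} hw q.
Arguments L_invr {a b d w} hw q.
Arguments L_comp {a b c d g h k} q.

Lemma Q_sobj a : Q a (sobj a).
Proof. by move=> i j; rewrite /= !ffunE srank_le. Qed.

Lemma fwdN a b c (g : chom a b) (m : chom (sobj b) (sobj c)) (m2 : chom (sobj a) (sobj c)) :
  loc_eq (zfwd g (N m)) (N m2).
Proof.
have [Rg _] := build (Q_chom g).
rewrite /N.
set Y := zfwd m _.
apply: le_trans (le_sym (L_invr (siota_inj a) _)) _.
apply: le_trans (L_bwd _ (@L_comp _ _ _ _ (siota a) g (ccomp (siota a) g) _ _)) _.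
  by move=> x; rewrite ccompE.
apply: le_trans (L_bwd _ (le_sym (L_comp (g := Rg) (h := siota b) _ _))) _.
  by move=> x; rewrite (sobj_uniq (ccomp (siota a) g) (ccomp Rg (siota b))) ccompE.
apply: le_trans (L_bwd _ (L_fwd _ (L_invl _ _))) _.
apply: L_bwd; apply: L_comp => x.
by rewrite (sobj_uniq m2 (ccomp Rg m)) ccompE.
Qed.

Arguments fwdN {a b c} g m m2.
Lemma mainL a b (p : zz a b) : Q a b /\ forall m, loc_eq p (N m).
Proof.
elim: p => {a b}.
- move=> a; split=> [|m]; first exact: Q_refl.
  rewrite /N; apply: le_sym.
  apply: le_trans (L_bwd _ (L_comp (k := siota a) _ _)) _.
    by move=> x; rewrite -ccompE (sobj_uniq (ccomp m (siota a)) (siota a)).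
  exact: L_invr.
- move=> a b c g p [HQ IH]; split=> [|m].
    exact: Q_trans (Q_chom g) HQ.
  have [m' _] := build HQ.
  apply: le_trans (L_fwd g (IH m')) _.
  exact: fwdN.
- move=> a b c w hw p [HQ IH]; split=> [|m].
    exact: Q_trans (Q_inj hw) HQ.
  have [m' _] := build HQ.
  apply: le_trans (L_bwd hw (IH m')) _.
  apply: le_trans (L_bwd hw (le_sym (fwdN w m m'))) _.
  exact: L_invr.
Qed.

Arguments mainL {a b} p.
End S.

Theorem mainTheorem9 (n : nat) :
  forall (a b : cobj n) (p q : zz a b), loc_eq p q.
Proof.
move=> a b p q.
have [HQ Hp] := @mainL n a b p; have [_ Hq] := @mainL n a b q.
have [m _] := @build n a b HQ.
exact: le_trans (Hp m) (le_sym (Hq m)).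
Qed.
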